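(* Let $X$ be a real Banach space. Consider: (1) $X$ is UR. (2) $d(Q_{S_X}(x,\frac1n),Q_{S_X}(x',\frac1n))\to\|x-x'\|$ uniformly on $(x,x')\in S_X\times S_X$. (3) $d(Q_{S_X}(x,\frac1n),Q_{S_X}(-x,\frac1n))\to2$ uniformly on $x\in S_X$. Then $(1)\Rightarrow(2)\Rightarrow(3)$.
   Context: $B_X,S_X$ are the closed unit ball and unit sphere of $X$. For non-empty bounded $F$, $x\in X$, $\delta\ge0$: $r(F,x)=\sup_{y\in F}\|x-y\|$, $Q_F(x,\delta)=\{y\in F:\|x-y\|\ge r(F,x)-\delta\}$. For non-empty sets $A,B$, $d(A,B)=\inf\{\|a-b\|:a\in A,b\in B\}$. $X$ is UR if $\|x_n-y_n\|\to0$ whenever $(x_n),(y_n)\subseteq S_X$ with $\|\frac{x_n+y_n}{2}\|\to1$. *)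

(* Defs.v *)
From HB Require Import structures.
From mathcomp Require Import all_boot all_order all_algebra.
From mathcomp Require Import all_classical all_reals all_analysis.
Set Implicit Arguments. Unset Strict Implicit. Unset Printing Implicit Defensive.
Import Order.TTheory GRing.Theory Num.Theory.
Import numFieldNormedType.Exports.
Local Open Scope classical_set_scope.
Local Open Scope ring_scope.

Section Defs.
Variables (R : realType) (X : normedModType R).

Definition unit_sphere : set X := [set y | `|y| = 1].

Definition rad (F : set X) (x : X) : R := sup [set `|x - y| | y in F].

Definition Qset (F : set X) (x : X) (delta : R) : set X :=
  [set y | F y /\ rad F x - delta <= `|x - y|].

Definition setdist (A B : set X) : R :=
  inf [set `|ab.1 - ab.2| | ab in [set ab : X * X | A ab.1 /\ B ab.2]].

Definition UR : Prop :=
  forall xn yn : nat -> X,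
    (forall n, `|xn n| = 1) -> (forall n, `|yn n| = 1) ->
    (fun n => `|2^-1 *: (xn n + yn n)|) @ \oo --> (1 : R) ->
    (fun n => `|xn n - yn n|) @ \oo --> (0 : R).

Definition Prop2 : Prop :=
  forall eps : R, 0 < eps -> exists N : nat, forall n : nat, (N <= n)%N ->
    forall x x' : X, unit_sphere x -> unit_sphere x' ->
      `| setdist (Qset unit_sphere x (n%:R)^-1) (Qset unit_sphere x' (n%:R)^-1)
         - `|x - x'| | < eps.

Definition Prop3 : Prop :=
  forall eps : R, 0 < eps -> exists N : nat, forall n : nat, (N <= n)%N ->
    forall x : X, unit_sphere x ->
      `| setdist (Qset unit_sphere x (n%:R)^-1) (Qset unit_sphere (- x) (n%:R)^-1)
         - 2 | < eps.
End Defs.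

(* Main.v *)
Require Import Defs.
From HB Require Import structures.
From mathcomp Require Import all_boot all_order all_algebra.
From mathcomp Require Import all_classical all_reals all_analysis.
From mathcomp Require Import lra.
Import Order.TTheory GRing.Theory Num.Theory.
Import numFieldNormedType.Exports.
Local Open Scope classical_set_scope.
Local Open Scope ring_scope.

Lemma UR_mod (R : realType) (X : normedModType R) : UR X ->
  forall e : R, 0 < e -> exists N : nat, forall x y : X, `|x| = 1 -> `|y| = 1 ->
   2 - (N.+1%:R)^-1 <= `|x - y| -> `|x + y| < e.
Proof.
move=> HUR e e0; apply: contrapT => /forallNP H.
have H' : forall N : nat, exists p : X * X, [/\ `|p.1| = 1, `|p.2| = 1,
   2 - (N.+1%:R)^-1 <= `|p.1 - p.2| & e <= `|p.1 + p.2|].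
  move=> N; have := H N => /existsNP [x] /existsNP [y] /not_implyP [hx]
    /not_implyP [hy] /not_implyP [hxy] /negP; rewrite -leNgt => he.
  by exists (x, y).
have [f Hf] := choice H'.
have := HUR (fun N => (f N).1) (fun N => - (f N).2).
have -> : (fun n => `|(f n).1 - - (f n).2|) = (fun n => `|(f n).1 + (f n).2|).
  by apply: funext => n; rewrite opprK.
move=> /(_ _ _ _)/cvgrPdist_lt.
have h1 : forall n, `|(f n).1| = 1 by move=> n; case: (Hf n).
have h2 : forall n, `|- (f n).2| = 1 by move=> n; rewrite normrN; case: (Hf n).
move=> /(_ h1 h2) HH; have := HH _ e e0; clear HH.
case.
  apply/cvgrPdist_lt => eps eps0.
  have [k hk] := ltr_add_invr eps0.
  exists k => // n /= kn.
  have [_ _ hn _] := Hf n.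
  rewrite normrZ ger0_norm ?invr_ge0 //.
  have le1 : `|(f n).1 - (f n).2| <= 2.
    by apply: (le_trans (ler_normB _ _)); rewrite h1; case: (Hf n) => _ -> _ _.
  have hkn : n.+1%:R^-1 <= k.+1%:R^-1 :> R.
    by rewrite lef_pV2 ?posrE ?ltr0n // ler_nat.
  rewrite add0r in hk.
  move: hn le1 hkn hk; set t := `|_ - _|; set a := n.+1%:R^-1; set b := k.+1%:R^-1.
  move=> hn le1 hkn hk.
  rewrite ger0_norm; lra.
move=> N _ HN.
have := HN N (leqnn N); have [_ _ _] := Hf N.
rewrite /= sub0r normrN ger0_norm //. 
move=> a b; have := lt_le_trans b a; by rewrite ltxx.
Qed.

Lemma rad_sphere (R : realType) (X : normedModType R) (x : X) :
  `|x| = 1 -> Defs.rad ((@unit_sphere R X)) x = 2.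
Proof.
move=> hx; rewrite /Defs.rad; apply/eqP; rewrite eq_le; apply/andP; split.
  apply: ge_sup; first by exists `|x - - x|, (- x) => //; rewrite /unit_sphere /= normrN.
  move=> _ [y hy <-]; apply: (le_trans (ler_normB _ _)).
  by rewrite hx hy.
have hub : has_ubound [set `|x - y| | y in (@unit_sphere R X)].
  exists 2 => _ [y hy <-]; apply: (le_trans (ler_normB _ _)).
  by rewrite hx hy.
have := ub_le_sup hub; apply.
exists (- x); first by rewrite /unit_sphere /= normrN.
by rewrite opprK -mulr2n normrMn hx.
Qed.

Lemma setdist_bounds (R : realType) (X : normedModType R) (A B : set X)
  (a0 b0 : X) (L : R) : A a0 -> B b0 ->
  (forall a b, A a -> B b -> L <= `|a - b|) ->
  L <= setdist A B <= `|a0 - b0|.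
Proof.
move=> ha hb hL; rewrite /setdist; apply/andP; split.
  apply: lb_le_inf; first by exists `|a0 - b0|, (a0, b0).
  by move=> _ [[a b] /= [ha' hb'] <-]; exact: hL.
apply: ge_inf.
  by exists 0 => _ [[a b] _ <-].
by exists (a0, b0).
Qed.

Theorem theorem3p12 (R : realType) (X : completeNormedModType R) :
  (UR X -> Prop2 X) /\ (Prop2 X -> Prop3 X).
Proof.
split.
  move=> HUR eps eps0.
  have e0 : 0 < eps / 4 by rewrite divr_gt0.
  have [N HN] := @UR_mod R X HUR _ e0.
  exists N.+1 => n hn x x' hx hx'.
  have hn0 : (0 < n)%N by apply: leq_trans hn.
  have hinv : n%:R^-1 <= N.+1%:R^-1 :> R.
    by rewrite lef_pV2 ?posrE ?ltr0n // ler_nat.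
  have hinv0 : 0 <= n%:R^-1 :> R by rewrite invr_ge0.
  have Qm : forall z y : X, `|z| = 1 -> Qset ((@unit_sphere R X)) z n%:R^-1 y ->
      `|y| = 1 /\ `|z + y| < eps / 4.
    move=> z y hz [hy hzy]; split => //; apply: HN => //.
    rewrite rad_sphere // in hzy; apply: le_trans hzy. by rewrite lerD2l lerN2.
  have Qn : forall z : X, `|z| = 1 -> Qset ((@unit_sphere R X)) z n%:R^-1 (- z).
    move=> z hz; split; first by rewrite /unit_sphere /= normrN.
    rewrite rad_sphere // opprK -mulr2n normrMn hz; lra.
  have := @setdist_bounds R X (Qset ((@unit_sphere R X)) x n%:R^-1)
     (Qset ((@unit_sphere R X)) x' n%:R^-1) (- x) (- x') (`|x - x'| - eps / 2)
     (Qn x hx) (Qn x' hx').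
  have -> : `|- x - - x'| = `|x - x'| by rewrite -opprD normrN.
  case/(_ _)/andP.
    move=> a b ha hb.
    have [_ h1] := Qm _ _ hx ha.
    have [_ h2] := Qm _ _ hx' hb.
    have t1 := ler_distD (- a) x x'.
    have t2 := ler_distD (- b) (- a) x'.
    rewrite opprK -opprD normrN in t1.
    rewrite opprK -opprD normrN -opprD normrN in t2.
    have e1 : `|- a + b| = `|a - b| by rewrite addrC distrC.
    have e2 : `|b + x'| = `|x' + b| by rewrite addrC.
    lra.
  move=> h3 h4; rewrite ltr_norml; apply/andP; split; lra.
move=> H2 eps eps0; have [N HN] := H2 eps eps0.
exists N => n hn x hx.
have hx' : (@unit_sphere R X) (- x) by rewrite /unit_sphere /= normrN.
have := HN n hn x (- x) hx hx'.
by rewrite opprK -mulr2n normrMn hx.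
Qed.
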